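(* Let $n\ge2$, let $\pi$ be uniform on $\mathrm{PF}_n$ and $f$ uniform on $\widetilde{\mathcal F}_n$. For $g\in\widetilde{\mathcal F}_n$ and $1\le i\le n-1$ let $X_i(g)=1$ if $g(i+1)<g(i)$ and $0$ otherwise. Then for all $t_1,\dots,t_{n-1}\in\{0,1\}$, $$P\{X_1(\pi)=t_1,\dots,X_{n-1}(\pi)=t_{n-1}\}=P\{X_1(f)=t_1,\dots,X_{n-1}(f)=t_{n-1}\}.$$ The same equality of joint distributions holds when $X_i$ is replaced by each of the indicators of $g(i+1)=g(i)$, of $g(i+1)\le g(i)$, of $g(i+1)>g(i)$, and of $g(i+1)\ge g(i)$.
   Context: A parking function of length $n$ is a sequence $(\pi_1,\dots,\pi_n)$ with $1\le\pi_i\le n$ such that $\#\{t:\pi_t\le i\}\ge i$ for all $1\le i\le n$; $\mathrm{PF}_n$ denotes the set of these. $\widetilde{\mathcal F}_n$ is the set of all functions $g:[n]\to[n+1]$ (written as sequences $(g(1),\dots,g(n))$), so $\mathrm{PF}_n\subseteq\widetilde{\mathcal F}_n$ and $|\widetilde{\mathcal F}_n|=(n+1)^n=(n+1)|\mathrm{PF}_n|$. *)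

(* Defs.v *)
From HB Require Import structures.
From mathcomp Require Import all_boot all_order all_algebra.
Set Implicit Arguments. Unset Strict Implicit. Unset Printing Implicit Defensive.
Import GRing.Theory Num.Theory.

(* Convention: a function g : [n] -> [n+1] is encoded as
   g : {ffun 'I_n -> 'I_n.+1}, where position i+1 of the paper is the
   ordinal i, and the paper's value g(i+1) is the ordinal value (g i) + 1.
   All comparisons between values are invariant under this shift. *)
Notation Ftilde n := {ffun 'I_n -> 'I_n.+1}.

(* Parking functions of length n: 1 <= pi_t <= n and, for all 1 <= i <= n,
   #{t : pi_t <= i} >= i.  With paper value pi_t = g t + 1, this reads
   g t < n and #{t : g t < i} >= i. *)
Definition PF (n : nat) : {set Ftilde n} :=
  [set g : Ftilde n | [forall t : 'I_n, (g t < n)%N] &&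
     [forall i : 'I_n, (i.+1 <= #|[set t : 'I_n | (g t < i.+1)%N]|)%N]].

(* The indicator statistic X_i(g) = R(g(i+1), g(i)), for paper indices
   1 <= i <= n-1 encoded as i : 'I_n.-1 (paper index i.+1). *)
(* gv g k = value of g at position k (as nat), for k < n (0 otherwise,
   never used out of range). *)
Definition gv (n : nat) (g : Ftilde n) (k : nat) : nat :=
  odflt 0%N (omap (fun j : 'I_n => nat_of_ord (g j)) (insub k)).

Definition Xstat (n : nat) (R : rel nat) (g : Ftilde n) (i : 'I_n.-1) : bool :=
  R (gv g i.+1) (gv g i).

Definition stat_event (n : nat) (R : rel nat) (t : 'I_n.-1 -> bool)
  : {set Ftilde n} :=
  [set g : Ftilde n | [forall i : 'I_n.-1, Xstat R g i == t i]].

Definition unif_prob (T : finType) (A E : {set T}) : rat :=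
  (#|A :&: E|%:R / #|A|%:R)%R.

Definition same_joint_law (n : nat) (R : rel nat) : Prop :=
  forall t : 'I_n.-1 -> bool,
    unif_prob (PF n) (stat_event R t) =
    unif_prob [set: Ftilde n] (stat_event R t).

(* Main.v *)
Require Import Defs.
From mathcomp Require Import all_boot all_order all_algebra zify ring.
Set Implicit Arguments. Unset Strict Implicit. Unset Printing Implicit Defensive.

Lemma card_ordlt N K : K <= N -> #|[set r : 'I_N | r < K]| = K.
Proof.
move=> hK.
have -> : [set r : 'I_N | r < K] = [set widen_ord hK r | r : 'I_K].
  apply/setP=> r; rewrite !inE; apply/idP/imsetP.
  - by move=> hr; exists (Ordinal hr) => //; apply: val_inj.
  - by case=> r' _ ->; rewrite /= ltn_ord.
rewrite card_imset ?card_ord //.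
by move=> a b /(congr1 val) /= /val_inj.
Qed.

Section Gen.
Variable n : nat.
Local Notation m := n.+1.
Local Notation FT := (Ftilde n).
Implicit Types (g : FT) (c : 'I_m).

Definition vrot (c : 'I_m) (g : FT) : FT := [ffun t => Zp_add (g t) c].

Definition cnt (g : FT) (i : nat) := #|[set t | g t < i]|.

Lemma PFE (g : FT) : (g \in PF n) = [forall i : 'I_n, i.+1 <= cnt g i.+1].
Proof.
rewrite /PF inE; apply/andP/idP => [[] //|H]; split => //.
apply/forallP => t.
have hn : 0 < n by apply: leq_ltn_trans (ltn_ord t).
have hi : n.-1 < n by rewrite ltn_predL.
move/forallP: H => /(_ (Ordinal hi)) /=.
rewrite prednK // /cnt => H.
have : [set t | g t < n] = setT.
  by apply/eqP; rewrite eqEcard subsetT /= cardsT card_ord.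
by move/setP => /(_ t); rewrite !inE.
Qed.


Lemma rotE c g t : val (vrot c g t) = (g t + c) %% m.
Proof. by rewrite /vrot ffunE. Qed.

Lemma modm_cases x c : x < m -> c < m ->
  (x + c) %% m = if x + c < m then x + c else x + c - m.
Proof.
move=> hx hc; case: ifP => h; first by rewrite modn_small.
have -> : x + c = (x + c - m) + m by lia.
by rewrite modnDr modn_small; lia.
Qed.

Lemma cnt_mono g a b : a <= b -> cnt g a <= cnt g b.
Proof.
move=> hab; apply: subset_leq_card; apply/subsetP => t; rewrite !inE => h.
exact: leq_trans h hab.
Qed.

Lemma cnt_ge g i : m <= i -> cnt g i = n.
Proof.
move=> hi; rewrite /cnt.
have -> : [set t | g t < i] = [set: 'I_n].
  by apply/setP => t; rewrite !inE (leq_trans (ltn_ord _) hi).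
by rewrite cardsT card_ord.
Qed.

Lemma cnt0 g : cnt g 0 = 0.
Proof. by rewrite /cnt; apply: eq_card0 => t; rewrite !inE. Qed.

Lemma cnt_between g a b : a <= b ->
  #|[set t | (a <= g t) && (g t < b)]| = cnt g b - cnt g a.
Proof.
move=> hab; rewrite /cnt -cardsDS.
  by apply: eq_card => t; rewrite !inE; lia.
by apply/subsetP => t; rewrite !inE => h; exact: leq_trans h hab.
Qed.

Lemma cnt_rot c g i : i <= n ->
  cnt (vrot c g) i = cnt g (i - c) + (cnt g (m - c + i) - cnt g (m - c)).
Proof.
move=> hi; rewrite {1}/cnt.
have -> : [set t | vrot c g t < i] =
   [set t | g t < i - c] :|: [set t | (m - c <= g t) && (g t < m - c + i)].
  apply/setP => t; rewrite !inE rotE modm_cases ?ltn_ord //.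
  have := ltn_ord (g t); have := ltn_ord c; case: ifP => *; lia.
rewrite cardsU.
have -> : [set t | g t < i - c] :&: [set t | (m - c <= g t) && (g t < m - c + i)] = set0.
  apply/setP => t; rewrite !inE; have := ltn_ord c; lia.
by rewrite cards0 subn0 cnt_between ?leq_addr.
Qed.

Lemma cnt_le_n g q : cnt g q <= n.
Proof. by have := max_card (mem [set t | g t < q]); rewrite card_ord. Qed.

Lemma cnt_rot_lo c g i : i <= c ->
  cnt (vrot c g) i = cnt g (m - c + i) - cnt g (m - c).
Proof.
move=> hic; rewrite cnt_rot; last by have := ltn_ord c; lia.
have -> : i - c = 0 by lia.
by rewrite cnt0.
Qed.

Lemma cnt_rot_hi c g i : c < i <= n ->
  cnt (vrot c g) i = cnt g (i - c) + n - cnt g (m - c).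
Proof.
move=> /andP[h1 h2]; rewrite cnt_rot // (cnt_ge g (i := m - c + i)); last by lia.
have := cnt_le_n g (m - c).
lia.
Qed.

Lemma PFE' (h : FT) : (h \in PF n) <-> (forall i, 0 < i <= n -> i <= cnt h i).
Proof.
rewrite PFE; split.
- move/forallP => H i /andP[h1 h2].
  have hi : i.-1 < n by lia.
  by have := H (Ordinal hi); rewrite /= prednK.
- by move=> H; apply/forallP => i; apply: H; rewrite /= ltn_ord.
Qed.

Definition M g q := cnt g q + m - q.

Definition Good g c :=
  (forall q, m - c <= q <= m -> M g (m - c) <= M g q) /\
  (forall q, 0 < q < m - c -> M g (m - c) < M g q).


Lemma rotPF c g : (vrot c g \in PF n) <-> Good g c.
Proof.
have hc := ltn_ord c.
rewrite PFE'; split.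
- move=> H; split.
  + move=> q /andP[h1 h2].
    have cm := cnt_mono g h1.
    case: (ltnP (m - c) q) => hq; last by have -> : q = m - c by lia.
    have := H (q - (m - c)); rewrite cnt_rot_lo; last by lia.
    have -> : m - c + (q - (m - c)) = q by lia.
    rewrite /M; lia.
  + move=> q /andP[h1 h2].
    have cm := cnt_mono g (ltnW h2).
    have := H (q + c); rewrite cnt_rot_hi; last by lia.
    rewrite addnK /M; have := cnt_le_n g q; lia.
- move=> [H1 H2] i /andP[h1 h2].
  case: (leqP i c) => hic.
  + rewrite cnt_rot_lo //.
    have := H1 (m - c + i); rewrite /M.
    have := cnt_mono g (leq_addr i (m - c)); lia.
  + rewrite cnt_rot_hi; last by lia.
    have := H2 (i - c); rewrite /M.
    have := cnt_le_n g (m - c); lia.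
Qed.

Lemma Good_uniq g c1 c2 : Good g c1 -> Good g c2 -> c1 = c2.
Proof.
move=> [A1 B1] [A2 B2]; apply: val_inj => /=.
have h1 := ltn_ord c1; have h2 := ltn_ord c2.
case: (ltngtP (m - c1) (m - c2)) => h; last by lia.
- have := B2 (m - c1); have := A1 (m - c2); lia.
- have := B1 (m - c2); have := A2 (m - c1); lia.
Qed.

Lemma Good_ex g : exists c, Good g c.
Proof.
case: (@arg_minnP _ (ord_max : 'I_m.+1) (fun q : 'I_m.+1 => 0 < q) (fun q => M g q)) => // p0 hp0 hmin.
have ex : exists q, (0 < q <= m) && (M g q == M g p0).
  by exists p0; rewrite hp0 eqxx -ltnS ltn_ord.
case: (ex_minnP ex) => j /andP[/andP[j1 j2] /eqP hj] jmin.
have hc : m - j < m by lia.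
exists (Ordinal hc); rewrite /Good /=.
have -> : m - (m - j) = j by lia.
split.
- move=> q /andP[q1 q2]; rewrite hj.
  have hq : q < m.+1 by lia.
  by have := hmin (Ordinal hq); rewrite /=; apply; lia.
- move=> q /andP[q1 q2]; rewrite hj.
  have hq : q < m.+1 by lia.
  have := hmin (Ordinal hq) q1; rewrite /= leq_eqVlt => /orP[/eqP e|//].
  have := jmin q; rewrite q1 /= e eqxx andbT; lia.
Qed.

Lemma pollak g : #|[set c | vrot c g \in PF n]| = 1.
Proof.
case: (Good_ex g) => c0 h0.
have -> : [set c | vrot c g \in PF n] = [set c0].
  apply/setP => c; rewrite in_set1 in_set; apply/idP/eqP.
  - by move=> h; apply: Good_uniq (proj1 (rotPF c g) h) h0.
  - by move=> ->; apply: (proj2 (rotPF c0 g)).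
by rewrite cards1.
Qed.

Lemma PF_count (h h' : FT) :
  (forall P : pred 'I_m, #|[set t | P (h t)]| = #|[set t | P (h' t)]|) ->
  (h \in PF n) = (h' \in PF n).
Proof.
move=> H; rewrite !PFE; apply: eq_forallb => i.
by rewrite /cnt (H (fun x : 'I_m => x < i.+1)).
Qed.

Lemma orbit_count (E : {set FT}) (phi : 'I_m -> FT -> FT) :
  (forall c g, g \in E -> phi c g \in E) ->
  (forall c, {in E &, injective (phi c)}) ->
  (forall g, g \in E -> #|[set c | phi c g \in PF n]| = 1) ->
  #|E| = m * #|PF n :&: E|.
Proof.
move=> Hin Hinj H1.
have step1 : #|E| = \sum_(g in E) #|[set c | phi c g \in PF n]|.
  by rewrite -sum1_card; apply: eq_bigr => g /H1 ->.
have step2 : forall c, #|[set g | (g \in E) && (phi c g \in PF n)]| = #|PF n :&: E|.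
  move=> c.
  have imE : phi c @: E = E.
    apply/eqP; rewrite eqEcard card_in_imset // leqnn andbT.
    by apply/subsetP => x /imsetP [g hg ->]; apply: Hin.
  rewrite -(card_in_imset (f := phi c)); last first.
    by move=> a b; rewrite !inE => /andP[ha _] /andP[hb _]; apply: Hinj.
  congr #|pred_of_set _|; apply/setP => x; apply/imsetP/idP.
  - by case=> g; rewrite in_set => /andP[hg hp] ->; rewrite in_set hp Hin.
  - rewrite in_set => /andP[hx hxE]; rewrite -imE in hxE; case/imsetP: hxE => g hg xE.
    by exists g => //; rewrite in_set hg -xE hx.
rewrite step1.
under eq_bigr do rewrite -sum1dep_card big_mkcond /=.
rewrite exchange_big /=.
transitivity (\sum_(c < m) #|PF n :&: E|); last first.
  by rewrite sum_nat_const card_ord.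
apply: eq_bigr => c _; rewrite -(step2 c) -sum1dep_card.
rewrite [LHS]big_mkcond [RHS]big_mkcond /=; apply: eq_bigr => g _; by case: (g \in E).
Qed.

End Gen.

Section Block.
Variable p : nat.
Local Notation n := p.+1.
Local Notation m := p.+2.
Local Notation FT := (Ftilde p.+1).
Implicit Types (g u : FT) (c : 'I_m).
Variables (S : pred 'I_p) (dir : bool).

Definition lo (k : 'I_p) : 'I_n := widen_ord (leqnSn p) k.
Definition hi (k : 'I_p) : 'I_n := lift ord0 k.
Lemma loE k : (lo k : nat) = k. Proof. by []. Qed.
Lemma hiE k : (hi k : nat) = k.+1. Proof. by []. Qed.

Definition bid (t : 'I_n) := #|[set k : 'I_p | (k < t) && ~~ S k]|.
Definition prec (j i : 'I_n) := if dir then j < i else i < j.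
Definition blk b := [set t : 'I_n | bid t == b].
Definition rk (i : 'I_n) := #|[set j | (bid j == bid i) && prec j i]|.
Definition C u b v := #|[set j | (bid j == b) && (u j <= v)]|.
Definition sel u b k := #|[set v : 'I_m | C u b v <= k]|.
Definition phi c g : FT := [ffun i => inord (sel (vrot c g) (bid i) (rk i))].
Definition Emono := [set g : FT | [forall i, forall j,
   (prec j i && (bid j == bid i)) ==> (g j <= g i)]].

Lemma prec_irr i : prec i i = false.
Proof. by rewrite /prec ltnn; case: dir. Qed.
Lemma prec_trans i j k : prec i j -> prec j k -> prec i k.
Proof. by rewrite /prec; case: dir => ? ?; lia. Qed.
Lemma prec_total i j : i != j -> prec i j || prec j i.
Proof.
rewrite /prec => /eqP hij; have : (i : nat) <> j by move=> /val_inj.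
by case: dir; lia.
Qed.

Lemma bid_lt t : bid t < n.
Proof. by rewrite /bid ltnS; have := max_card (mem [set k : 'I_p | (k < t) && ~~ S k]); rewrite card_ord. Qed.

Lemma C_mono u b v w : v <= w -> C u b v <= C u b w.
Proof.
move=> h; apply: subset_leq_card; apply/subsetP => j; rewrite !inE.
by case/andP => -> /leq_trans; apply.
Qed.

Lemma C_le_blk u b v : C u b v <= #|blk b|.
Proof.
apply: subset_leq_card; apply/subsetP => j; rewrite !inE.
by case/andP.
Qed.

Lemma C_top u b v : p.+1 <= v -> C u b v = #|blk b|.
Proof.
move=> hv; apply: eq_card => j; rewrite !inE.
by rewrite (leq_trans _ hv) ?andbT // -ltnS ltn_ord.
Qed.

Lemma sel_le u b k v : v < m -> (sel u b k <= v) = (k < C u b v).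
Proof.
move=> hv; case h: (k < C u b v).
- rewrite /sel -(card_ordlt (N:=m) (ltnW hv)); apply: subset_leq_card.
  apply/subsetP => v'; rewrite !inE => hv'.
  rewrite ltnNge; apply/negP => hvv.
  have := C_mono u b hvv; lia.
- apply/negbTE; rewrite -ltnNge /sel -(card_ordlt (N:=m) hv); apply: subset_leq_card.
  apply/subsetP => v'; rewrite !inE ltnS => hv'.
  have := C_mono u b hv'; lia.
Qed.

Lemma sel_monok u b k k' : k <= k' -> sel u b k <= sel u b k'.
Proof.
move=> h; apply: subset_leq_card; apply/subsetP => v; rewrite !inE.
by move=> /leq_trans; apply.
Qed.

Lemma sel_lt u b k : k < #|blk b| -> sel u b k < m.
Proof. by move=> hk; rewrite ltnS sel_le // C_top. Qed.

Lemma rk_lt i : rk i < #|blk (bid i)|.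
Proof.
apply: proper_card; apply/properP; split.
- by apply/subsetP => j; rewrite !inE => /andP[].
- by exists i; rewrite !inE ?eqxx ?prec_irr.
Qed.

Lemma rk_lt2 j i : bid j = bid i -> prec j i -> rk j < rk i.
Proof.
move=> hb hp; apply: proper_card; apply/properP; split.
- apply/subsetP => k; rewrite !inE => /andP[/eqP hk hk2].
  by rewrite hk hb eqxx (prec_trans hk2 hp).
- by exists j; rewrite !inE ?hb ?eqxx ?prec_irr.
Qed.

Lemma rk_inj j i : bid j = bid i -> rk j = rk i -> j = i.
Proof.
move=> hb hr; apply/eqP; apply/negPn/negP => /prec_total /orP[] h.
- by have := rk_lt2 hb h; rewrite hr ltnn.
- by have := rk_lt2 (esym hb) h; rewrite hr ltnn.
Qed.

Lemma card_rk b K : K <= #|blk b| ->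
  #|[set j | (bid j == b) && (rk j < K)]| = K.
Proof.
move=> hK.
have hB : #|blk b| <= n by have := max_card (mem (blk b)); rewrite card_ord.
pose f (j : 'I_n) : 'I_n := inord (rk j).
have fE j : bid j = b -> (f j : nat) = rk j.
  move=> hj; rewrite /f inordK //; apply: leq_trans (rk_lt j) _.
  by rewrite hj -ltnS ltnS.
have finj : {in blk b &, injective f}.
  move=> x y; rewrite !inE => /eqP hx /eqP hy hf.
  apply: rk_inj; first by rewrite hx hy.
  by rewrite -(fE _ hx) -(fE _ hy) hf.
have imB : f @: blk b = [set r : 'I_n | r < #|blk b|].
  apply/eqP; rewrite eqEcard card_in_imset // card_ordlt // leqnn andbT.
  apply/subsetP => r /imsetP[j hjb ->]; move: hjb; rewrite !inE => /eqP hj.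
  by rewrite fE // -hj rk_lt.
rewrite -(card_in_imset (f := f)); last first.
  by move=> x y; rewrite !inE => /andP[hx _] /andP[hy _]; apply: finj; rewrite inE.
transitivity #|[set r : 'I_n | r < K]|; last exact: card_ordlt (leq_trans hK hB).
congr #|pred_of_set _|; apply/setP => r; rewrite inE; apply/imsetP/idP.
- case=> j; rewrite inE => /andP[/eqP hj hr] ->; by rewrite fE.
- move=> hr.
  have : r \in f @: blk b by rewrite imB inE (leq_trans hr hK).
  case/imsetP => j; rewrite inE => /eqP hj hjr; exists j => //.
  by rewrite inE hj eqxx -(fE _ hj) -hjr.
Qed.

Lemma phiE c g i : (phi c g i : nat) = sel (vrot c g) (bid i) (rk i).
Proof. by rewrite /phi ffunE inordK // sel_lt // rk_lt. Qed.

Lemma C_phi c g b v : v < m -> C (phi c g) b v = C (vrot c g) b v.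
Proof.
move=> hv.
rewrite -[RHS](card_rk (C_le_blk (vrot c g) b v)) /C.
apply: eq_card => j; rewrite !inE phiE.
case: eqP => // <-; by rewrite sel_le.
Qed.

Lemma phi_mono c g : phi c g \in Emono.
Proof.
rewrite inE; apply/forallP => i; apply/forallP => j; apply/implyP => /andP[hp /eqP hb].
rewrite !phiE hb; apply: sel_monok; apply: ltnW; exact: rk_lt2.
Qed.

Lemma sel_id g i : g \in Emono -> sel g (bid i) (rk i) = g i.
Proof.
rewrite inE => /forallP H.
have Hm : forall j, prec j i -> bid j = bid i -> g j <= g i.
  by move=> j h1 h2; have := forallP (H i) j; rewrite h1 h2 eqxx.
have Hm' : forall j, prec i j -> bid j = bid i -> g i <= g j.
  by move=> j h1 h2; have := forallP (H j) i; rewrite h1 h2 eqxx.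
apply/eqP; rewrite eqn_leq; apply/andP; split.
- rewrite sel_le //.
  rewrite /rk /C.
  have := cardsU1 i [set j | (bid j == bid i) && prec j i].
  rewrite in_set prec_irr andbF /= => hU.
  have : #|i |: [set j | (bid j == bid i) && prec j i]| <=
         #|[set j | (bid j == bid i) && (g j <= g i)]|.
    apply: subset_leq_card; apply/subsetP => j; rewrite !inE.
    case/orP => [/eqP -> | /andP[/eqP hb hp]]; first by rewrite !eqxx leqnn.
    by rewrite hb eqxx Hm.
  by rewrite hU add1n.
- case: (posnP (g i)) => [-> //|hpos].
  rewrite leqNgt; apply/negP => h.
  have h' : sel g (bid i) (rk i) <= (g i).-1 by lia.
  rewrite sel_le in h'; last by have := ltn_ord (g i); lia.
  have : C g (bid i) (g i).-1 <= rk i.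
    rewrite /rk /C; apply: subset_leq_card; apply/subsetP => j; rewrite !inE.
    case/andP => /eqP hb hj; rewrite hb eqxx /=.
    have hne : j != i by apply/eqP => e; move: hj; rewrite e; lia.
    case/orP: (prec_total hne) => // h2.
    by have := Hm' j h2 hb; lia.
  lia.
Qed.

End Block.

Section Block2.
Variable p : nat.
Local Notation n := p.+1.
Local Notation m := p.+2.
Local Notation FT := (Ftilde p.+1).
Implicit Types (g u : FT) (c : 'I_m).
Variables (S : pred 'I_p) (dir : bool).
Local Notation bid := (bid S).
Local Notation C := (C S).

Lemma Zp_addK' (a c : 'I_m) : Zp_add (Zp_add a c) (Zp_opp c) = a.
Proof. by rewrite -Zp_addA (Zp_addC c) Zp_addNz Zp_addC Zp_add0z. Qed.

Lemma Zp_add_inj (c a a' : 'I_m) : Zp_add a c = Zp_add a' c -> a = a'.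
Proof. by move=> h; rewrite -(Zp_addK' a c) h Zp_addK'. Qed.

Lemma vrot_inj c : injective (vrot c).
Proof.
move=> g1 g2 h; apply/ffunP => t; have := congr1 (fun f : FT => f t) h.
by rewrite !ffunE; apply: Zp_add_inj.
Qed.

Lemma C_ext u u' b : (forall v, v < m -> C u b v = C u' b v) ->
  forall P : pred 'I_m, #|[set j | (bid j == b) && P (u j)]| =
                        #|[set j | (bid j == b) && P (u' j)]|.
Proof.
move=> H P.
pose N (w : FT) (x : 'I_m) := #|[set j | (bid j == b) && (w j == x)]|.
pose Cl (w : FT) (x : nat) := #|[set j | (bid j == b) && (w j < x)]|.
have split : forall w (x : 'I_m), C w b x = N w x + Cl w x.
  move=> w x; rewrite /C /N /Cl.
  have -> : [set j | (bid j == b) && (w j <= x)] =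
      [set j | (bid j == b) && (w j == x)] :|: [set j | (bid j == b) && (w j < x)].
    apply/setP => j; rewrite !inE leq_eqVlt; case: (bid j == b) => //=.
  rewrite cardsU.
  have -> : [set j | (bid j == b) && (w j == x)] :&: [set j | (bid j == b) && (w j < x)] = set0.
    apply/setP => j; rewrite !inE; case: (bid j == b) => //=; case: eqP => [-> |] /=; rewrite ?ltnn ?andbF //.
  by rewrite cards0 subn0.
have hCl : forall x : 'I_m, Cl u x = Cl u' x.
  move=> x; case: (posnP x) => [x0 | xpos].
    rewrite /Cl !eq_card0 // => j; rewrite !inE x0 ltn0 andbF //.
  have e : forall w, Cl w x = C w b x.-1.
    move=> w; apply: eq_card => j; rewrite !inE; congr (_ && _); lia.
  rewrite !e H //; have := ltn_ord x; lia.
have hN : forall x : 'I_m, N u x = N u' x.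
  move=> x; have := split u x; have := split u' x; rewrite H ?ltn_ord // hCl; lia.
have part : forall w : FT, #|[set j | (bid j == b) && P (w j)]| = \sum_(x | P x) N w x.
  move=> w; rewrite -sum1dep_card (partition_big w P); last first.
    by move=> j /andP[].
  apply: eq_bigr => x Px; rewrite sum1dep_card /N; apply: eq_card => j; rewrite !inE.
  case: (w j =P x) => [-> |]; rewrite ?andbF ?andbT ?Px //; by case: (bid j == b).
rewrite !part; apply: eq_bigr => x _; exact: hN.
Qed.

Lemma count_blocks u (P : pred 'I_m) :
  #|[set t | P (u t)]| = \sum_(b < n) #|[set j | (bid j == b) && P (u j)]|.
Proof.
rewrite -sum1dep_card (partition_big (fun t => Ordinal (bid_lt S t)) predT) //.
apply: eq_bigr => b _; rewrite sum1dep_card; apply: eq_card => j; rewrite !inE.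
rewrite -(inj_eq val_inj) /= andbC //.
Qed.

Lemma phi_PF c g : (phi S dir c g \in PF n) = (vrot c g \in PF n).
Proof.
apply: PF_count => P; rewrite !count_blocks; apply: eq_bigr => b _.
by apply: C_ext => v hv; apply: C_phi.
Qed.

Lemma C_unrot c g b v : C g b v =
  #|[set j | (bid j == b) && (Zp_add (vrot c g j) (Zp_opp c) <= v)]|.
Proof. by apply: eq_card => j; rewrite !inE ffunE Zp_addK'. Qed.

Lemma phi_inj c : {in Emono S dir &, injective (phi S dir c)}.
Proof.
move=> g1 g2 h1 h2 he.
have hC : forall b v, v < m -> C g1 b v = C g2 b v.
  move=> b v hv.
  have hR : forall v, v < m -> C (vrot c g1) b v = C (vrot c g2) b v.
    by move=> v' hv'; rewrite -!(C_phi S dir) // he.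
  by rewrite !(C_unrot c) (C_ext hR (fun x => Zp_add x (Zp_opp c) <= v)).
apply/ffunP => i; apply: val_inj => /=.
rewrite -(sel_id i h1) -(sel_id i h2); rewrite /sel; apply: eq_card => v.
by rewrite !inE hC.
Qed.

Lemma mono_count : #|Emono S dir| = m * #|PF n :&: Emono S dir|.
Proof.
apply: (orbit_count (phi := phi S dir)).
- by move=> c g _; apply: phi_mono.
- exact: phi_inj.
- move=> g _; rewrite -(pollak g); apply: eq_card => c; rewrite [LHS]in_set [RHS]in_set.
  exact: phi_PF.
Qed.

Definition mono (a b : nat) := if dir then a <= b else b <= a.

Lemma bid_mono (j i : 'I_n) : j <= i -> bid j <= bid i.
Proof.
move=> h; apply: subset_leq_card; apply/subsetP => k; rewrite !inE.
by case/andP => hk ->; rewrite (leq_trans hk h).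
Qed.

Lemma bid_between (j i : 'I_n) (k : 'I_p) : j <= k -> k < i -> bid j = bid i -> S k.
Proof.
move=> h1 h2 hb; apply/negPn/negP => hS.
have sub : [set k' : 'I_p | (k' < j) && ~~ S k'] \subset [set k' : 'I_p | (k' < i) && ~~ S k'].
  apply/subsetP => k'; rewrite !inE; case/andP => hk ->; rewrite andbT.
  by apply: leq_trans hk _; lia.
have eqs : [set k' : 'I_p | (k' < j) && ~~ S k'] = [set k' : 'I_p | (k' < i) && ~~ S k'].
  by apply/eqP; rewrite eqEcard sub /=; rewrite /bid in hb; rewrite hb.
have : k \in [set k' : 'I_p | (k' < i) && ~~ S k'] by rewrite inE h2 hS.
rewrite -eqs inE => /andP[hk _]; lia.
Qed.

Lemma bid_lohi (k : 'I_p) : S k -> bid (lo k) = bid (hi k).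
Proof.
move=> hS; apply: eq_card => k'; rewrite !inE loE hiE.
case hk: (S k') => /=; rewrite ?andbF ?andbT //.
have : (k' : nat) <> k by move=> /val_inj e; rewrite e hS in hk.
lia.
Qed.

Lemma Emono_E : Emono S dir =
  [set g : FT | [forall k, S k ==> mono (g (lo k)) (g (hi k))]].
Proof.
apply/setP => g; rewrite !inE; apply/idP/idP.
- move=> /forallP H; apply/forallP => k; apply/implyP => hS.
  rewrite /mono; case hd: dir.
  + have := forallP (H (hi k)) (lo k); rewrite /prec hd loE hiE ltnSn bid_lohi // eqxx.
    by [].
  + have := forallP (H (lo k)) (hi k); rewrite /prec hd loE hiE ltnSn bid_lohi // eqxx.
    by [].
- move=> /forallP H.
  have chain : forall d (j i : 'I_n), (i : nat) = j + d -> bid j = bid i ->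
      mono (g j) (g i).
    elim=> [|d IH] j i hij hb.
      have -> : i = j by apply: val_inj => /=; lia.
      by rewrite /mono; case: dir.
    have hk : i.-1 < p by have := ltn_ord i; lia.
    pose k := Ordinal hk.
    have hS : S k by apply: (bid_between (j := j) (i := i)) => //=; lia.
    have hhi : hi k = i by apply: val_inj; rewrite /= /bump /=; lia.
    have hb' : bid j = bid (lo k).
      apply/eqP; rewrite eqn_leq bid_mono ?loE /=; last by lia.
      by rewrite hb -hhi -bid_lohi // leqnn.
    have hlo : (lo k : nat) = j + d by rewrite loE /=; lia.
    have := IH j (lo k) hlo hb'.
    have := implyP (H k) hS; rewrite hhi /mono; case: dir => h1 h2; [exact: leq_trans h2 h1 | exact: leq_trans h1 h2].
  apply/forallP => i; apply/forallP => j; apply/implyP => /andP[hp /eqP hb].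
  move: hp; rewrite /prec; case hd: dir => hp.
  + have := chain (i - j) j i (ltac:(lia)) hb; rewrite /mono hd.
    by [].
  + have := chain (j - i) i j (ltac:(lia)) (esym hb); rewrite /mono hd.
    by [].
Qed.

Definition Eeq := [set g : FT | [forall k, S k ==> (g (lo k) == g (hi k))]].

Lemma eqset_count : #|Eeq| = m * #|PF n :&: Eeq|.
Proof.
apply: (@orbit_count p.+1 Eeq (@vrot p.+1)).
- move=> c g; rewrite !inE => /forallP H; apply/forallP => k; apply/implyP => hS.
  have := implyP (H k) hS => /eqP e; by rewrite !ffunE e.
- by move=> c x y _ _; apply: vrot_inj.
- by move=> g _; apply: pollak.
Qed.

End Block2.
Import GRing.Theory Num.Theory.

Lemma forall_split (T : finType) (i : T) (P : pred T) :
  [forall j, P j] = P i && [forall j, (j != i) ==> P j].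
Proof.
apply/forallP/andP => [H | [Hi /forallP H] j].
- by split => //; apply/forallP => j; apply/implyP => _.
- by case: (eqVneq j i) => [-> //| hj]; exact: (implyP (H j) hj).
Qed.

Section IE.
Variable p : nat.
Local Notation n := p.+1.
Local Notation m := p.+2.
Local Notation FT := (Ftilde p.+1).
Variables (R : rel nat) (gb : bool).

Definition cond (k : option bool) (x : bool) :=
  if k is Some b then x == b else true.

Definition Ev (kap : 'I_p -> option bool) :=
  [set g : FT | [forall i, cond (kap i) (Xstat R g i)]].

Definition Base (S : pred 'I_p) :=
  [set g : FT | [forall i, S i ==> (Xstat R g i == gb)]].

Hypothesis base : forall S, #|Base S| = m * #|PF n :&: Base S|.

Definition nbad (kap : 'I_p -> option bool) := #|[set i | kap i == Some (~~ gb)]|.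

Lemma incl_excl kap : #|Ev kap| = m * #|PF n :&: Ev kap|.
Proof.
have [N] := ubnP (nbad kap); elim: N kap => // N IH kap hN.
case: (pickP [pred i | kap i == Some (~~ gb)]) => [i /= /eqP hi | none].
- pose k1 := fun j => if j == i then None else kap j.
  pose k2 := fun j => if j == i then Some gb else kap j.
  have hbad : forall k', (forall j, j != i -> k' j = kap j) -> k' i != Some (~~ gb) ->
      nbad k' < N.
    move=> k' hk' hki; suff : nbad k' < nbad kap by lia.
    rewrite /nbad.
    apply: proper_card; apply/properP; split.
      apply/subsetP => j; rewrite !inE; case: (eqVneq j i) => [-> | hj].
        by rewrite (negbTE hki).
      by rewrite hk'.
    by exists i; rewrite !inE ?hi ?eqxx // (negbTE hki).
  have h1 : nbad k1 < N by apply: hbad => [j hj | ]; rewrite /k1 ?(negbTE hj) ?eqxx.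
  have h2 : nbad k2 < N.
    apply: hbad => [j hj | ]; rewrite /k2 ?(negbTE hj) ?eqxx //.
    by case: gb.
  have hrest : forall (k' : 'I_p -> option bool) (g : FT), (forall j, j != i -> k' j = kap j) ->
      [forall j, (j != i) ==> cond (k' j) (Xstat R g j)] =
      [forall j, (j != i) ==> cond (kap j) (Xstat R g j)].
    move=> k' g hk'; apply: eq_forallb => j.
    by case: (eqVneq j i) => [//| hj]; rewrite hk'.
  have e1 : forall j, j != i -> k1 j = kap j by move=> j hj; rewrite /k1 (negbTE hj).
  have e2 : forall j, j != i -> k2 j = kap j by move=> j hj; rewrite /k2 (negbTE hj).
  have Ev_split : forall (k' : 'I_p -> option bool) (g : FT), (g \in Ev k') =
      cond (k' i) (Xstat R g i) && [forall j, (j != i) ==> cond (k' j) (Xstat R g j)].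
    by move=> k' g; rewrite inE (forall_split i).
  have sub : Ev k2 \subset Ev k1.
    apply/subsetP => g; rewrite !Ev_split.
    by rewrite (hrest _ _ e1) (hrest _ _ e2) /cond /k1 /k2 eqxx => /andP[_ ->].
  have eqD : Ev kap = Ev k1 :\: Ev k2.
    apply/setP => g; rewrite in_setD !Ev_split.
    rewrite (hrest _ _ e1) (hrest _ _ e2) /cond /k1 /k2 hi eqxx /=.
    by case: (Xstat R g i); case: gb; case: [forall j, _].
  rewrite eqD cardsDS // setIDA cardsD.
  have -> : PF n :&: Ev k1 :&: Ev k2 = PF n :&: Ev k2.
    by rewrite -setIA (setIidPr sub).
  by rewrite mulnBr -!IH.
- have -> : Ev kap = Base [pred j | kap j == Some gb].
    apply/setP => g; rewrite !inE; apply: eq_forallb => j.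
    have := none j; rewrite /= /cond.
    case: (kap j) => [b|] //=; case: b; case: gb; case: (Xstat R g j) => //.
  exact: base.
Qed.

Lemma stat_Ev (t : 'I_p -> bool) : @stat_event n R t = Ev (fun i => Some (t i)).
Proof. by apply/setP => g; rewrite !inE. Qed.

Lemma Ev_T : Ev (fun _ => None) = [set: FT].
Proof. by apply/setP => g; rewrite !inE; apply/forallP. Qed.

Lemma law_ok : same_joint_law n R.
Proof.
move=> t.
have hT := incl_excl (fun _ => None); rewrite Ev_T setIT in hT.
have hE := incl_excl (fun i => Some (t i)); rewrite -stat_Ev in hE.
rewrite /unif_prob setTI hT hE !natrM.
have hPF0 : 0 < #|PF n|.
  have : 0 < #|[set: FT]| by apply/card_gt0P; exists [ffun _ => ord0].
  by rewrite hT muln_gt0 => /andP[_ ->].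
have hPF : (#|PF n|%:R : rat) != 0%R by rewrite pnatr_eq0 -lt0n.
have hm : (m%:R : rat) != 0%R by rewrite pnatr_eq0.
by rewrite -mulf_div divff // mul1r.
Qed.

End IE.

Lemma gvE p (g : Ftilde p.+1) (k : 'I_p.+1) : gv g k = g k.
Proof.
rewrite /gv; case: insubP => [u _ hu | ]; last by rewrite ltn_ord.
by rewrite /= (val_inj hu).
Qed.

Lemma XstatE p R (g : Ftilde p.+1) (i : 'I_p) :
  Xstat R g i = R (g (hi i)) (g (lo i)).
Proof.
rewrite /Xstat.
have -> : i.+1 = hi i by [].
have -> : (i : nat) = lo i by [].
by rewrite !gvE.
Qed.

Lemma base_mono p R gb dir :
  (forall a b : nat, (R b a == gb) = mono dir a b) ->
  forall S, #|@Base p R gb S| = p.+2 * #|PF p.+1 :&: @Base p R gb S|.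
Proof.
move=> H S.
have -> : @Base p R gb S = Emono S dir.
  rewrite Emono_E; apply/setP => g; rewrite !inE; apply: eq_forallb => i.
  by rewrite XstatE H.
exact: mono_count.
Qed.

Lemma base_eq p :
  forall S, #|@Base p (fun a b => a == b) true S| =
            p.+2 * #|PF p.+1 :&: @Base p (fun a b => a == b) true S|.
Proof.
move=> S.
have -> : @Base p (fun a b => a == b) true S = Eeq S.
  apply/setP => g; rewrite !inE; apply: eq_forallb => i.
  by rewrite XstatE eqb_id eq_sym.
exact: eqset_count.
Qed.

Theorem theorem7 (n : nat) (hn : (2 <= n)%N) :
  same_joint_law n (fun a b => (a < b)%N) /\
  same_joint_law n (fun a b => a == b) /\
  same_joint_law n (fun a b => (a <= b)%N) /\
  same_joint_law n (fun a b => (a > b)%N) /\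
  same_joint_law n (fun a b => (a >= b)%N).
Proof.
case: n hn => [//|p] _.
split; [|split; [|split; [|split]]].
- apply: (law_ok (gb := false)); apply: (base_mono (dir := true)) => a b.
  by rewrite /mono eqbF_neg -leqNgt.
- apply: (law_ok (gb := true)); exact: base_eq.
- apply: (law_ok (gb := true)); apply: (base_mono (dir := false)) => a b.
  by rewrite /mono eqb_id.
- apply: (law_ok (gb := false)); apply: (base_mono (dir := false)) => a b.
  by rewrite /mono eqbF_neg -leqNgt.
- apply: (law_ok (gb := true)); apply: (base_mono (dir := true)) => a b.
  by rewrite /mono eqb_id.
Qed.
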